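(* Let $f$ satisfy conditions (1) and (2b), let $p>0$, $a=p/\pi$, and $n\in\mathbb{N}_0$. In the expression \[ 2\pi\int_0^\infty a\sum_{k=0}^\infty c_{2k}\,p^k\sum_{l=0}^k(-1)^{k-l}\frac{p^l}{(k-l)!\,(l!)^2}\,r^{2l+2n+1}\,e^{-pr^2}\,dr \] the order of summation and integration may be reversed, for arbitrary values of $p$.
   Context: $f:[0,\infty)\to\mathbb{R}$; $c_n=2\pi\int_0^\infty f(r)\,r^{n+1}dr$. Condition (1): there is a constant $F$ with $0\le f(r)\le F$ for all $r\ge0$, $c_0$ exists and $c_0>0$. Condition (2b): $c_{2n}$ exists for all $n\in\mathbb{N}_0$ and $c_n^{1/n}=o(n^{1/2})$ as $n\to\infty$. *)

(* Defs.v *)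
From HB Require Import structures.
From mathcomp Require Import all_boot all_order all_algebra.
From mathcomp Require Import all_classical all_reals all_analysis.
Set Implicit Arguments. Unset Strict Implicit. Unset Printing Implicit Defensive.
Import Order.TTheory GRing.Theory Num.Def Num.Theory.
Import numFieldNormedType.Exports.
Local Open Scope classical_set_scope.
Local Open Scope ring_scope.

Definition halfline (R : realType) : set R := `[0%R, +oo[%classic.
Arguments halfline R : clear implicits.

Definition moment_integrand (R : realType) (f : R -> R) (n : nat) : R -> R :=
  fun r => f r * r ^+ n.+1.

Definition moment_exists (R : realType) (f : R -> R) (n : nat) : Prop :=
  (@lebesgue_measure R).-integrable (halfline R) (EFin \o moment_integrand f n).

Definition moment (R : realType) (f : R -> R) (n : nat) : R :=
  2 * pi * (\int[@lebesgue_measure R]_(r in halfline R) moment_integrand f n r).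

Definition cond1 (R : realType) (f : R -> R) : Prop :=
  (exists F : R, forall r, 0 <= r -> 0 <= f r <= F) /\
  moment_exists f 0 /\ 0 < moment f 0.

(* Condition (2b): c_{2n} exists for all n and c_n^{1/n} = o(n^{1/2}) as n -> oo
   (little-o unfolded: for every eps > 0, eventually c_n^{1/n} <= eps * sqrt n). *)
Definition cond2b (R : realType) (f : R -> R) : Prop :=
  (forall n : nat, moment_exists f (2 * n)) /\
  (forall eps : R, 0 < eps ->
     \forall n \near \oo, moment f n `^ (n%:R^-1) <= eps * Num.sqrt (n%:R : R)).

Definition summand (R : realType) (f : R -> R) (p : R) (n k : nat) : R -> R :=
  fun r => (p / pi) * moment f (2 * k) * p ^+ k *
    (\sum_(l < k.+1) (-1) ^+ (k - l) * p ^+ l / ((k - l)`!%:R * (l`!%:R) ^+ 2)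
        * r ^+ (2 * l + 2 * n + 1)) * expR (- (p * r ^+ 2)).

(* Main.v *)
Require Import Defs.
From HB Require Import structures.
From mathcomp Require Import all_boot all_order all_algebra.
From mathcomp Require Import all_classical all_reals all_analysis.
Import Order.TTheory GRing.Theory Num.Def Num.Theory.
Import numFieldNormedType.Exports.
Local Open Scope classical_set_scope.
Local Open Scope ring_scope.
From mathcomp Require Import ring lra zify.

Lemma bin_le2 n m : ('C(n, m) <= 2 ^ n)%N.
Proof.
elim: n m => [|n IH] [|m] //=.
- by rewrite bin0 expn_gt0.
- rewrite binS expnS mul2n -addnn; exact: leq_add.
Qed.

Lemma fact_split a b : ((a + b)`! <= 2 ^ (a + b) * (a`! * b`!))%N.
Proof.
have := bin_fact (leq_addr b a); rewrite addKn => <-.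
by rewrite leq_mul2r bin_le2 orbT.
Qed.

Lemma nat_main l k n : (l <= k)%N ->
  (2 ^ l * (l + n)`! * k`! <= 2 ^ n * n`! * 8 ^ k * ((k - l)`! * l`! ^ 2))%N.
Proof.
move=> lk.
have hA := fact_split l n.
have hK : (k`! <= 2 ^ k * (l`! * (k - l)`!))%N.
  by have := fact_split l (k - l); rewrite subnKC.
apply: (leq_trans (leq_mul (leq_mul (leqnn (2 ^ l)) hA) hK)).
have e8 : (8 ^ k = 2 ^ k * 2 ^ k * 2 ^ k)%N by rewrite -!expnMn.
have lk2 : (2 ^ l <= 2 ^ k)%N by rewrite leq_exp2l.
rewrite e8 expnD.
move: lk2; set X := (2 ^ l)%N; set Y := (2 ^ n)%N; set Z := (2 ^ k)%N.
set a := l`!; set b := n`!; set c := (k - l)`! => lk2.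
have h1 : (X * X <= Z * Z)%N by apply: leq_mul.
have -> : (X * (X * Y * (a * b)) * (Z * (a * c)) = (X * X) * (Z * Y * b * (c * a ^ 2)))%N by ring.
have -> : (Y * b * (Z * Z * Z) * (c * a ^ 2) = (Z * Z) * (Z * Y * b * (c * a ^ 2)))%N by ring.
by rewrite leq_mul2r h1 orbT.
Qed.

Lemma pow_le_expR (R : realType) (x : R) j : 0 <= x -> x ^+ j / j`!%:R <= expR x.
Proof.
case: j => [|j] x0.
  rewrite expr0 fact0 divr1; have := expR_ge1Dx x; lra.
have := expR_ge1Dxn j x0; lra.
Qed.

Lemma gauss_bound (R : realType) (p r : R) j : 0 < p -> 0 <= r ->
  r ^+ (2 * j + 1) * expR (- (p * r ^+ 2)) <=
  j`!%:R * (2 / p) ^+ j * expR (2 / p) * expR (- r).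
Proof.
move=> p0 r0.
have jf0 : 0 < (j`!%:R : R) by rewrite ltr0n fact_gt0.
have x0 : 0 <= p * r ^+ 2 / 2 by apply: divr_ge0 => //; apply: mulr_ge0 => //; [lra|exact: sqr_ge0].
have h1 : r ^+ (2 * j) <= j`!%:R * (2 / p) ^+ j * expR (p * r ^+ 2 / 2).
  have e : r ^+ (2 * j) = (2 / p) ^+ j * (p * r ^+ 2 / 2) ^+ j.
    rewrite -exprMn exprM; congr (_ ^+ _); field; lra.
  move: x0 (@pow_le_expR R _ j x0); set X := p * r ^+ 2 / 2 => x0 hX.
  rewrite e [j`!%:R * _]mulrC -[(2 / p) ^+ j * j`!%:R * expR X]mulrA; apply: ler_wpM2l.
    by apply: exprn_ge0; apply: divr_ge0; lra.
  by move: hX; rewrite ler_pdivrMr // mulrC.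
have h2 : r <= expR r by have := expR_ge1Dx r; lra.
have h3 : p * r ^+ 2 / 2 + r + - (p * r ^+ 2) <= 2 / p + - r.
  have e : 2 / p + - r - (p * r ^+ 2 / 2 + r + - (p * r ^+ 2)) = p / 2 * (r - 2 / p) ^+ 2.
    field; lra.
  rewrite -subr_ge0 e; apply: mulr_ge0; [apply: divr_ge0; lra| exact: sqr_ge0].
rewrite exprD expr1 -!mulrA.
apply: le_trans (_ : (j`!%:R * (2 / p) ^+ j * expR (p * r ^+ 2 / 2)) * (expR r * expR (- (p * r ^+ 2))) <= _).
  apply: ler_pM => //.
  - exact: exprn_ge0.
  - by apply: mulr_ge0 => //; exact: expR_ge0.
  - by apply: ler_wpM2r => //; exact: expR_ge0.
rewrite -!mulrA; apply: ler_wpM2l; first by apply: ltW.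
apply: ler_wpM2l; first by apply: exprn_ge0; apply: divr_ge0; lra.
rewrite -!expRD; rewrite ler_expR; lra.
Qed.

Lemma moment_ge0 (R : realType) (f : R -> R) k : cond1 f -> 0 <= moment f k.
Proof.
case=> [[F hF] _]; rewrite /moment; apply: mulr_ge0.
  by apply: mulr_ge0 => //; exact: ltW (pi_gt0 R).
apply: Rintegral_ge0 => x; rewrite /halfline /= in_itv /= andbT => x0.
rewrite /moment_integrand; apply: mulr_ge0; last exact: exprn_ge0.
by case/andP: (hF x x0).
Qed.

Lemma powR_root_bound (R : realType) (c e : R) (m : nat) : 0 <= c -> (0 < m)%N ->
  c `^ (m%:R^-1) <= e -> c <= e ^+ m.
Proof.
move=> c0 m0 h.
have -> : c = (c `^ (m%:R^-1)) ^+ m.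
  rewrite -powR_mulrn ?powR_ge0 // -powRrM mulVf ?powRr1 //.
  by rewrite pnatr_eq0 -lt0n.
apply: lerXn2r => //; rewrite nnegrE ?powR_ge0 //.
exact: le_trans (powR_ge0 _ _) h.
Qed.

Definition coef {R : realType} (p : R) (n k : nat) : R :=
  \sum_(l < k.+1) p ^+ l / ((k - l)`!%:R * (l`!%:R) ^+ 2) *
     ((l + n)`!%:R * (2 / p) ^+ (l + n) * expR (2 / p)).

Definition acoef {R : realType} (f : R -> R) (p : R) (n k : nat) : R :=
  p / pi * moment f (2 * k) * p ^+ k * coef p n k.

Lemma coef_ge0 (R : realType) (p : R) n k : 0 < p -> 0 <= coef p n k.
Proof.
move=> p0; apply: sumr_ge0 => l _; apply: mulr_ge0.
  apply: divr_ge0; first by apply: exprn_ge0; exact: ltW.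
  by apply: mulr_ge0 => //; apply: exprn_ge0.
apply: mulr_ge0; last exact: expR_ge0.
apply: mulr_ge0 => //; apply: exprn_ge0; apply: divr_ge0; lra.
Qed.

Lemma acoef_ge0 (R : realType) (f : R -> R) (p : R) n k : cond1 f -> 0 < p ->
  0 <= acoef f p n k.
Proof.
move=> c1 p0; rewrite /acoef; apply: mulr_ge0; last exact: coef_ge0.
apply: mulr_ge0; last by apply: exprn_ge0; lra.
apply: mulr_ge0; last exact: moment_ge0.
by apply: divr_ge0; [lra | exact: ltW (pi_gt0 R)].
Qed.

Lemma summand_bound (R : realType) (f : R -> R) (p r : R) n k :
  cond1 f -> 0 < p -> 0 <= r ->
  `|summand f p n k r| <= acoef f p n k * expR (- r).
Proof.
move=> c1 p0 r0.
have K0 : 0 <= p / pi * moment f (2 * k) * p ^+ k.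
  apply: mulr_ge0; last by apply: exprn_ge0; lra.
  apply: mulr_ge0; last exact: moment_ge0.
  by apply: divr_ge0; [lra | exact: ltW (pi_gt0 R)].
rewrite /summand /acoef.
move: K0; set K := p / pi * moment f (2 * k) * p ^+ k => K0.
rewrite normrM normrM (ger0_norm K0) (ger0_norm (expR_ge0 _)) -mulrA -[K * coef p n k * _]mulrA.
apply: ler_wpM2l => //.
apply: le_trans (_ : (\sum_(l < k.+1) `|(-1) ^+ (k - l) * p ^+ l / ((k - l)`!%:R * l`!%:R ^+ 2)
     * r ^+ (2 * l + 2 * n + 1)|) * expR (- (p * r ^+ 2)) <= _).
  by apply: ler_wpM2r; [exact: expR_ge0 | exact: ler_norm_sum].
rewrite /coef !mulr_suml; apply: ler_sum => l _.
have D0 : 0 <= p ^+ l / ((k - l)`!%:R * l`!%:R ^+ 2).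
  apply: divr_ge0; first by apply: exprn_ge0; exact: ltW.
  by apply: mulr_ge0 => //; apply: exprn_ge0.
rewrite normrM (ger0_norm (exprn_ge0 _ r0)).
rewrite -[(-1) ^+ (k - l) * p ^+ l / _]mulrA normrM.
rewrite normrX normrN normr1 expr1n mul1r (ger0_norm D0).
rewrite -!mulrA; apply: ler_wpM2l; first by apply: exprn_ge0; exact: ltW.
apply: ler_wpM2l; first by rewrite invr_ge0; apply: mulr_ge0 => //; apply: exprn_ge0.
have -> : (2 * l + 2 * n + 1 = 2 * (l + n) + 1)%N by lia.
move: (@gauss_bound R p r (l + n) p0 r0); rewrite !mulrA; exact.
Qed.

Lemma term_bound (R : realType) (p : R) n k l : 0 < p -> (l <= k)%N ->
  p ^+ l / ((k - l)`!%:R * (l`!%:R) ^+ 2) *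
     ((l + n)`!%:R * (2 / p) ^+ (l + n) * expR (2 / p)) <=
  expR (2 / p) * (2 / p) ^+ n * ((2 ^ n * n`! * 8 ^ k)%:R / k`!%:R).
Proof.
move=> p0 lk.
have e1 : p ^+ l * (2 / p) ^+ (l + n) = 2 ^+ l * (2 / p) ^+ n.
  rewrite exprD mulrA -exprMn; congr (_ ^+ _ * _); field; lra.
have D0 : 0 < ((k - l)`!%:R * (l`!%:R) ^+ 2 : R).
  by apply: mulr_gt0; [rewrite ltr0n fact_gt0 | apply: exprn_gt0; rewrite ltr0n fact_gt0].
have K0 : 0 < (k`!%:R : R) by rewrite ltr0n fact_gt0.
have -> : p ^+ l / ((k - l)`!%:R * (l`!%:R) ^+ 2) *
     ((l + n)`!%:R * (2 / p) ^+ (l + n) * expR (2 / p)) =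
   expR (2 / p) * (2 / p) ^+ n * ((2 ^+ l * (l + n)`!%:R) / ((k - l)`!%:R * (l`!%:R) ^+ 2)).
  have pl : p ^+ l != 0 by rewrite expf_neq0 // lt0r_neq0.
  have Dn := lt0r_neq0 D0.
  rewrite exprD [(2 / p) ^+ l]expr_div_n; field.
  by rewrite pl !pnatr_eq0 -!lt0n !fact_gt0.
apply: ler_wpM2l.
  by apply: mulr_ge0; [exact: expR_ge0 | apply: exprn_ge0; apply: divr_ge0; lra].
rewrite ler_pdivlMr // mulrAC ler_pdivrMr //.
rewrite -(natrX R 2 l) -(natrX R l`! 2) -!natrM ler_nat.
by have := @nat_main l k n lk; rewrite mulnC.
Qed.

Lemma coef_bound (R : realType) (p : R) n k : 0 < p ->
  coef p n k <= k.+1%:R *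
     (expR (2 / p) * (2 / p) ^+ n * ((2 ^ n * n`! * 8 ^ k)%:R / k`!%:R)).
Proof.
move=> p0; rewrite /coef.
apply: le_trans (_ : \sum_(l < k.+1) (expR (2 / p) * (2 / p) ^+ n *
   ((2 ^ n * n`! * 8 ^ k)%:R / k`!%:R)) <= _).
  by apply: ler_sum => l _; apply: term_bound => //; rewrite -ltnS.
by rewrite big_const_ord iter_addr addr0 [k.+1%:R * _]mulr_natl.
Qed.

Lemma acoef_bound (R : realType) (f : R -> R) (p : R) n k : cond1 f -> 0 < p ->
  acoef f p n k <=
  (p / pi * expR (2 / p) * (2 / p) ^+ n * (2 ^ n * n`!)%:R) *
  (moment f (2 * k) * (16 * p) ^+ k / k`!%:R).
Proof.
move=> c1 p0.
have K0 : 0 <= p / pi * moment f (2 * k) * p ^+ k.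
  apply: mulr_ge0; last by apply: exprn_ge0; lra.
  apply: mulr_ge0; last exact: moment_ge0.
  by apply: divr_ge0; [lra | exact: ltW (pi_gt0 R)].
rewrite /acoef.
apply: le_trans (ler_wpM2l K0 (@coef_bound R p n k p0)) _.
have pi0 : pi != 0 :> R by rewrite lt0r_neq0 // pi_gt0.
have kf0 : k`!%:R != 0 :> R by rewrite pnatr_eq0 -lt0n fact_gt0.
have p0' : p != 0 by rewrite lt0r_neq0.
set Q := p / pi * moment f (2 * k) * p ^+ k * expR (2 / p) * (2 / p) ^+ n *
   (2 ^ n * n`!)%:R / k`!%:R.
have Q0 : 0 <= Q.
  apply: divr_ge0 => //; apply: mulr_ge0 => //; apply: mulr_ge0.
    by apply: mulr_ge0 => //; exact: expR_ge0.
  by apply: exprn_ge0; apply: divr_ge0; lra.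
have -> : p / pi * moment f (2 * k) * p ^+ k *
  (k.+1%:R * (expR (2 / p) * (2 / p) ^+ n * ((2 ^ n * n`! * 8 ^ k)%:R / k`!%:R))) =
  Q * (k.+1 * 8 ^ k)%:R.
  rewrite /Q; move: pi0; generalize (pi : R) => P P0.
  by rewrite !natrM; field; rewrite ?kf0 ?P0 ?p0'.
have -> : p / pi * expR (2 / p) * (2 / p) ^+ n * (2 ^ n * n`!)%:R *
  (moment f (2 * k) * (16 * p) ^+ k / k`!%:R) = Q * (16 ^ k)%:R.
  rewrite /Q; move: pi0; generalize (pi : R) => P P0.
  by rewrite natrX [(16 * p) ^+ k]exprMn; field; rewrite ?kf0 ?P0 ?p0'.
apply: ler_wpM2l => //; rewrite ler_nat.
have -> : (16 ^ k = 2 ^ k * 8 ^ k)%N by rewrite -expnMn.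
by rewrite leq_mul2r ltn_expl // orbT.
Qed.

Lemma b_geom (R : realType) (f : R -> R) (p : R) : cond1 f -> cond2b f -> 0 < p ->
  exists B : R, 0 <= B /\
   forall k, moment f (2 * k) * (16 * p) ^+ k / k`!%:R <= B * (2^-1) ^+ k.
Proof.
move=> c1 [_ c2] p0.
set c := (64 * p * expR 1)^-1.
have c0 : 0 < c by rewrite invr_gt0; apply: mulr_gt0; [lra | exact: expR_gt0].
set eps := Num.sqrt c.
have eps0 : 0 < eps by rewrite sqrtr_gt0.
case: (c2 eps eps0) => N _ HN.
set b := fun k => moment f (2 * k) * (16 * p) ^+ k / k`!%:R.
have b0 k : 0 <= b k.
  rewrite /b; apply: divr_ge0 => //; apply: mulr_ge0; first exact: (@moment_ge0 R f (2 * k) c1).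
  by apply: exprn_ge0; lra.
have big k : (N < k)%N -> b k <= (2^-1) ^+ k.
  move=> Nk.
  have k0 : (0 < 2 * k)%N by lia.
  have h : moment f (2 * k) `^ (2 * k)%:R^-1 <= eps * Num.sqrt (2 * k)%:R.
    by apply: HN => /=; lia.
  have hm : moment f (2 * k) <= (c * 2 * k%:R) ^+ k.
    apply: le_trans (@powR_root_bound R _ _ (2 * k) (@moment_ge0 R f (2 * k) c1) k0 h) _.
    rewrite exprM [(eps * _) ^+ 2]exprMn !sqr_sqrtr ?ler0n //; last exact: ltW.
    by rewrite natrM mulrA.
  have kf0 : 0 < (k`!%:R : R) by rewrite ltr0n fact_gt0.
  apply: le_trans (_ : (c * 2 * k%:R) ^+ k * (16 * p) ^+ k / k`!%:R <= _).
    rewrite /b; apply: ler_wpM2r; first by rewrite invr_ge0 ltW.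
    by apply: ler_wpM2r => //; apply: exprn_ge0; lra.
  have -> : (c * 2 * k%:R) ^+ k * (16 * p) ^+ k / k`!%:R =
      ((c * 2) * (16 * p)) ^+ k * (k%:R ^+ k / k`!%:R).
    rewrite !exprMn; field; exact: lt0r_neq0.
  apply: le_trans (_ : ((c * 2) * (16 * p)) ^+ k * (expR 1) ^+ k <= _).
    apply: ler_wpM2l; first by apply: exprn_ge0; apply: mulr_ge0; [lra|lra].
    rewrite -expRM_natl mulr1; exact: pow_le_expR.
  rewrite -exprMn; have -> : c * 2 * (16 * p) * expR 1 = 2^-1; last by [].
  rewrite /c; field.
  by apply/andP; split; [apply: lt0r_neq0; exact: expR_gt0 | lra].
exists (1 + \sum_(j < N.+1) b j * 2 ^+ j); split.
  apply: addr_ge0 => //; apply: sumr_ge0 => j _; apply: mulr_ge0 => //.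
move=> k; rewrite -/(b k); have [Nk|kN] := ltnP N k.
  apply: le_trans (big k Nk) _; rewrite -[X in X <= _]mul1r.
  apply: ler_wpM2r; first by apply: exprn_ge0; lra.
  rewrite lerDl; apply: sumr_ge0 => j _; apply: mulr_ge0 => //; by apply: exprn_ge0; lra.
have -> : b k = (b k * 2 ^+ k) * (2^-1) ^+ k.
  by rewrite -mulrA -exprMn mulfV ?expr1n ?mulr1 // pnatr_eq0.
apply: ler_wpM2r; first by apply: exprn_ge0; lra.
apply: le_trans (_ : \sum_(j < N.+1) b j * 2 ^+ j <= _); last by rewrite lerDr.
have kN' : (k < N.+1)%N by [].
rewrite (bigD1 (Ordinal kN')) //= lerDl.
apply: sumr_ge0 => j _; apply: mulr_ge0 => //; by apply: exprn_ge0; lra.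
Qed.
Lemma summand_measurable (R : realType) (f : R -> R) (p : R) n k (D : set R) :
  measurable_fun D (summand f p n k).
Proof.
apply: measurable_funTS.
have -> : summand f p n k =
  (fun r => p / pi * moment f (2 * k) * p ^+ k *
    (\sum_(l < k.+1) (-1) ^+ (k - l) * p ^+ l / ((k - l)`!%:R * (l`!%:R) ^+ 2)
        * r ^+ (2 * l + 2 * n + 1))) \* (fun r => expR (- (p * r ^+ 2))).
  by apply/funext => r.
apply: measurable_realfun.measurable_funM.
  have -> : (fun r : R => p / pi * moment f (2 * k) * p ^+ k *
    (\sum_(l < k.+1) (-1) ^+ (k - l) * p ^+ l / ((k - l)`!%:R * (l`!%:R) ^+ 2)
        * r ^+ (2 * l + 2 * n + 1))) =
    (fun _ => p / pi * moment f (2 * k) * p ^+ k) \* (fun r =>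
    (\sum_(l < k.+1) (-1) ^+ (k - l) * p ^+ l / ((k - l)`!%:R * (l`!%:R) ^+ 2)
        * r ^+ (2 * l + 2 * n + 1))).
    by apply/funext => r.
  apply: measurable_realfun.measurable_funM => //.
  apply: measurable_fun_approximation.measurable_sum => l.
  have -> : (fun r : R => (-1) ^+ (k - l) * p ^+ l / ((k - l)`!%:R * (l`!%:R) ^+ 2)
        * r ^+ (2 * l + 2 * n + 1)) =
    (fun _ => (-1) ^+ (k - l) * p ^+ l / ((k - l)`!%:R * (l`!%:R) ^+ 2)) \*
    (fun r => r ^+ (2 * l + 2 * n + 1)).
    by apply/funext => r.
  apply: measurable_realfun.measurable_funM => //; exact: exprn_measurable.
apply: measurableT_comp => //.
apply: measurableT_comp => //.
have -> : (fun r : R => p * r ^+ 2) = (fun _ => p) \* (fun r => r ^+ 2).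
  by apply/funext => r.
apply: measurable_realfun.measurable_funM => //; exact: exprn_measurable.
Qed.

Lemma abstract_swap (R : realType) (D : set R) (g : nat -> R -> R) (a : nat -> R)
  (phi : R -> R) :
  measurable D ->
  (forall k, measurable_fun D (g k)) ->
  (forall k, 0 <= a k) ->
  cvgn (series a) ->
  (@lebesgue_measure R).-integrable D (EFin \o phi) ->
  (forall x, D x -> 0 <= phi x) ->
  (forall k x, D x -> `|g k x| <= a k * phi x) ->
  (forall x, D x -> cvgn (series (fun k => g k x))) /\
  (forall k, (@lebesgue_measure R).-integrable D (EFin \o g k)) /\
  (@lebesgue_measure R).-integrable D
     (EFin \o (fun r => limn (series (fun k => g k r)))) /\
  cvgn (series (fun k => \int[@lebesgue_measure R]_(r in D) g k r)) /\
  (\int[@lebesgue_measure R]_(r in D) limn (series (fun k => g k r)))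
  = limn (series (fun k => \int[@lebesgue_measure R]_(r in D) g k r)).
Proof.
move=> mD mg a0 ca iphi phi0 gle.
set L := limn (series a).
have aL N : series a N <= L.
  apply: nondecreasing_cvgn_le => //.
  exact: (@nondecreasing_series _ a predT 0).
have L0 : 0 <= L by apply: le_trans (aL 0%N); rewrite /series /= big_geq.
have cvgx x : D x -> cvgn (series (fun k => a k * phi x)).
  move=> Dx; have -> : (fun k => a k * phi x) = phi x *: a.
    by apply/funext => k /=; rewrite mulrC.
  exact: is_cvg_seriesZ.
have limx x : D x -> limn (series (fun k => a k * phi x)) = L * phi x.
  move=> Dx; have -> : (fun k => a k * phi x) = phi x *: a.
    by apply/funext => k /=; rewrite mulrC.
  by rewrite lim_seriesZ // mulrC.
have ncvg x : D x -> cvgn [normed series (fun k => g k x)].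
  move=> Dx; apply: (series_le_cvg _ _ _ (cvgx x Dx)) => k //=.
  - by rewrite mulr_ge0 // phi0.
  - exact: gle.
have pcvg x : D x -> cvgn (series (fun k => g k x)).
  by move=> Dx; apply: normed_cvg; exact: ncvg.
have Sle x : D x -> `|limn (series (fun k => g k x))| <= L * phi x.
  move=> Dx; apply: le_trans (lim_series_norm (ncvg x Dx)) _.
  rewrite -limx //; apply: lim_series_le => //; first exact: ncvg.
  exact: cvgx.
  by move=> k; exact: gle.
have Ple x N : D x -> `|series (fun k => g k x) N| <= L * phi x.
  move=> Dx; apply: le_trans (_ : series (fun k => a k * phi x) N <= _).
    rewrite /series /=; apply: le_trans (ler_norm_sum _ _ _) _.
    by apply: ler_sum => k _; exact: gle.
  rewrite /series /= -mulr_suml; apply: ler_wpM2r; first exact: phi0.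
  exact: aL.
have ig k : (@lebesgue_measure R).-integrable D (EFin \o g k).
  have iZ := integrableZl (mu := @lebesgue_measure R) mD (a k) iphi.
  apply: (le_integrable (mu := @lebesgue_measure R) mD _ _ iZ).
  - by apply/measurable_realfun.measurable_EFinP; exact: mg.
  - move=> x Dx /=; rewrite lee_fin.
    rewrite (ger0_norm (mulr_ge0 (a0 k) (phi0 x Dx))); exact: gle.
set S := fun r => limn (series (fun k => g k r)).
set P := fun N r => series (fun k => g k r) N.
have mP N : measurable_fun D (P N).
  rewrite /P /series /=; apply: measurable_sum => j; exact: mg.
have PS x : D x -> P ^~ x @ \oo --> S x.
  by move=> Dx; apply: (pcvg x Dx).
have mS : measurable_fun D S by apply: (measurable_realfun.measurable_fun_cvg mP PS).
have iLphi : (@lebesgue_measure R).-integrable D (EFin \o (fun x => L * phi x)).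
  have iZ2 := integrableZl (mu := @lebesgue_measure R) mD L iphi.
  apply: (eq_integrable (mu := @lebesgue_measure R) mD _ _ _ iZ2).
  by move=> x _ /=.
have mPE := fun N => proj2 (measurable_realfun.measurable_EFinP D (P N)) (mP N).
have mSE := proj2 (measurable_realfun.measurable_EFinP D S) mS.
have fS : \forall x \ae (@lebesgue_measure R),
    D x -> (fun N => (EFin \o P N) x) @ \oo --> (EFin \o S) x.
  apply: aeW => x Dx /=; apply: cvg_EFin; first exact: nearW.
  exact: PS.
have fg : \forall x \ae (@lebesgue_measure R),
    forall N, D x -> (`|(EFin \o P N) x| <= (EFin \o (fun x => (L * phi x)%R)) x)%E.
  by apply: aeW => x N Dx /=; rewrite lee_fin; exact: Ple.
have [iS _ cv] := dominated_convergence (mu := @lebesgue_measure R) mD mPE mSE fS iLphi fg.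
split; first exact: pcvg.
split; first exact: ig.
split; first exact: iS.
have gE k : (\int[@lebesgue_measure R]_(x in D) (EFin \o g k) x)%E =
    (\int[@lebesgue_measure R]_(r in D) g k r)%:E.
  by rewrite /Rintegral fineK //; exact: (integrable_fin_num (mu:=@lebesgue_measure R) mD (ig k)).
have SE : (\int[@lebesgue_measure R]_(x in D) (EFin \o S) x)%E =
    (\int[@lebesgue_measure R]_(r in D) S r)%:E.
  by rewrite /Rintegral fineK //; exact: (integrable_fin_num (mu:=@lebesgue_measure R) mD iS).
have eqN N : (\int[@lebesgue_measure R]_(x in D) (EFin \o P N) x)%E =
    (series (fun k => \int[@lebesgue_measure R]_(r in D) g k r) N)%:E.
  rewrite /P /series /=.
  under eq_integral do rewrite -sumEFin.
  rewrite (integral_sum (mu:=@lebesgue_measure R) mD ig).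
  rewrite -sumEFin; apply: eq_bigr => k _; exact: gE.
move: cv; rewrite SE.
have -> : (fun n => \int[@lebesgue_measure R]_(x in D) (EFin \o P n) x)%E =
   (EFin \o series (fun k => \int[@lebesgue_measure R]_(r in D) g k r)).
  by apply/funext => N; rewrite eqN.
move=> /fine_cvg cv'.
split; first exact: (cvgP _ cv').
by rewrite (cvg_lim _ cv').
Qed.

Theorem lemma11 (R : realType) (f : R -> R) (p : R) (n : nat) :
  cond1 f -> cond2b f -> 0 < p ->
  (* the series defining the integrand converges at every r >= 0 *)
  (forall r, 0 <= r -> cvgn (series (fun k => summand f p n k r))) /\
  (* every summand is integrable on [0,oo) *)
  (forall k, (@lebesgue_measure R).-integrable (halfline R) (EFin \o summand f p n k)) /\
  (* the sum is integrable on [0,oo) *)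
  (@lebesgue_measure R).-integrable (halfline R)
     (EFin \o (fun r => limn (series (fun k => summand f p n k r)))) /\
  (* the series of integrals converges *)
  cvgn (series (fun k => \int[@lebesgue_measure R]_(r in halfline R) summand f p n k r)) /\
  (* and the two orders of summation / integration agree *)
  2 * pi * (\int[@lebesgue_measure R]_(r in halfline R)
               limn (series (fun k => summand f p n k r)))
  = 2 * pi * limn (series (fun k =>
               \int[@lebesgue_measure R]_(r in halfline R) summand f p n k r)).
Proof.
move=> c1 c2 p0.
have [B [B0 hB]] := @b_geom R f p c1 c2 p0.
set C1 := p / pi * expR (2 / p) * (2 / p) ^+ n * (2 ^ n * n`!)%:R.
have C10 : 0 <= C1.
  rewrite /C1; apply: mulr_ge0 => //; apply: mulr_ge0.
    apply: mulr_ge0; last exact: expR_ge0.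
    by apply: divr_ge0; [lra | exact: ltW (pi_gt0 R)].
  by apply: exprn_ge0; apply: divr_ge0; lra.
have ca : cvgn (series (acoef f p n)).
  apply: (series_le_cvg (v_ := geometric (C1 * B) (2^-1))).
  - by move=> k; exact: (@acoef_ge0 R f p n k c1 p0).
  - move=> k /=; apply: mulr_ge0; first exact: mulr_ge0.
    by apply: exprn_ge0; rewrite invr_ge0; lra.
  - move=> k /=; apply: le_trans (@acoef_bound R f p n k c1 p0) _.
    rewrite -/C1 -[C1 * B * _]mulrA; apply: ler_wpM2l => //; exact: hB.
  - apply: is_cvg_geometric_series; rewrite ger0_norm ?invr_ge0 //; last lra.
have mD : measurable (halfline R) by exact: measurable_itv.
have iphi : (@lebesgue_measure R).-integrable (halfline R) (EFin \o (fun r => expR (- r))).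
  have ie := @integrable_exponential_pdf R 1 ltr01.
  have ie2 := integrableS (mu := @lebesgue_measure R) measurableT mD (@subsetT _ _) ie.
  apply: (eq_integrable (mu := @lebesgue_measure R) mD _ _ _ ie2).
  move=> x; rewrite inE /halfline /= in_itv /= andbT => x0.
  by rewrite /= exponential_pdfE // mul1r mulN1r.
have := @abstract_swap R (halfline R) (fun k => summand f p n k) (acoef f p n)
  (fun r => expR (- r)) mD (fun k => @summand_measurable R f p n k _)
  (fun k => @acoef_ge0 R f p n k c1 p0) ca iphi.
case.
- by move=> x _; exact: expR_ge0.
- move=> k x; rewrite /halfline /= in_itv /= andbT => x0.
  exact: summand_bound.
move=> H1 [H2 [H3 [H4 H5]]].
split.
  move=> r r0; apply: H1; by rewrite /halfline /= in_itv /= andbT.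
split; first exact: H2.
split; first exact: H3.
split; first exact: H4.
by rewrite H5.
Qed.
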